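(* Let $\Lambda\in\mathbb{R}^{p\times p}$ be a connected discrete-time interconnection, $r\in\mathbb{R}^p$ with $r^T\Lambda=r^T$, $r^T\mathbf 1=1$, and $\Omega$ symmetric positive definite with $(\Lambda-\mathbf 1r^T)^T\Omega(\Lambda-\mathbf 1r^T)-\Omega=-I_p$. Define $V(\mathbf x):=\mathbf x^T(\Omega\otimes I_n)\mathbf x$. Then for every $Q:\mathbb{N}\to\overline{\mathcal Q}_n$ and all $k\in\mathbb{N}$, the solution of $\mathbf x^+=(I_{np}+(\Lambda-I_p)\otimes Q_k)\mathbf x$ satisfies $$V(\mathbf x(k+1)-\bar{\mathbf x})-V(\mathbf x(k)-\bar{\mathbf x})\le-(\mathbf x(k)-\bar{\mathbf x})^T(I_p\otimes Q_k^2)(\mathbf x(k)-\bar{\mathbf x}),$$ where $\bar{\mathbf x}:=(\mathbf 1r^T\otimes I_n)\mathbf x(0)$.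
   Context: $\mathbf 1$ all-ones vector; $\otimes$ Kronecker product; $\overline{\mathcal Q}_n$ symmetric positive semidefinite $n\times n$ matrices with induced 2-norm at most $1$. Discrete-time interconnection: $\lambda_{ij}\ge0$, row sums $1$; graph edge $(n_i,n_j)$ iff $\lambda_{ij}>0$; connected if some node is reachable by a directed path from every other node. *)

(* Defs.v *)
From mathcomp Require Import all_boot all_order all_algebra.
From mathcomp Require Export mxtens.
Set Implicit Arguments. Unset Strict Implicit. Unset Printing Implicit Defensive.
Import Order.TTheory GRing.Theory Num.Theory.
Local Open Scope ring_scope.

Definition ones (R : pzRingType) (p : nat) : 'cV[R]_p := const_mx 1.

Definition qform (R : pzRingType) (m : nat) (A : 'M[R]_m) (x : 'cV[R]_m) : R :=
  (x^T *m A *m x) 0 0.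

Definition sym_mx (R : pzRingType) (m : nat) (A : 'M[R]_m) : Prop := A^T = A.

Definition psd_mx (R : numDomainType) (m : nat) (A : 'M[R]_m) : Prop :=
  sym_mx A /\ forall v : 'cV[R]_m, 0 <= qform A v.

Definition pd_mx (R : numDomainType) (m : nat) (A : 'M[R]_m) : Prop :=
  sym_mx A /\ forall v : 'cV[R]_m, v != 0 -> 0 < qform A v.

Definition norm2_le1 (R : numDomainType) (m : nat) (A : 'M[R]_m) : Prop :=
  forall v : 'cV[R]_m, ((A *m v)^T *m (A *m v)) 0 0 <= (v^T *m v) 0 0.

Definition Qbar (R : numDomainType) (n : nat) (A : 'M[R]_n) : Prop :=
  psd_mx A /\ norm2_le1 A.

Definition edge_rel (R : numDomainType) (p : nat) (L : 'M[R]_p) : rel 'I_p :=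
  fun i j => 0 < L i j.

Definition dt_interconnection (R : numDomainType) (p : nat) (L : 'M[R]_p) : Prop :=
  (forall i j, 0 <= L i j) /\ (forall i, \sum_j L i j = 1).

Definition connected_graph (R : numDomainType) (p : nat) (L : 'M[R]_p) : Prop :=
  exists k : 'I_p, forall j : 'I_p, connect (edge_rel L) j k.

(* Main.v *)
Require Import Defs.
From mathcomp Require Import all_boot all_order all_algebra.
From mathcomp Require Import mxtens.
From mathcomp Require Import ring lra zify.
Import Order.TTheory GRing.Theory Num.Theory.
Set Implicit Arguments. Unset Strict Implicit. Unset Printing Implicit Defensive.
Local Open Scope ring_scope.

Section Tens.
Variable R : comPzRingType.

Lemma tensmxDl m n p q (A B : 'M[R]_(m,n)) (C : 'M[R]_(p,q)) :
  (A + B) *t C = A *t C + B *t C.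
Proof. by apply/matrixP=> i j; rewrite !mxE mulrDl. Qed.
Lemma tensmxDr m n p q (A : 'M[R]_(m,n)) (B C : 'M[R]_(p,q)) :
  A *t (B + C) = A *t B + A *t C.
Proof. by apply/matrixP=> i j; rewrite !mxE mulrDr. Qed.
Lemma tensmxNl m n p q (A : 'M[R]_(m,n)) (C : 'M[R]_(p,q)) :
  (- A) *t C = - (A *t C).
Proof. by apply/matrixP=> i j; rewrite !mxE mulNr. Qed.
Lemma tensmxNr m n p q (A : 'M[R]_(m,n)) (C : 'M[R]_(p,q)) :
  A *t (- C) = - (A *t C).
Proof. by apply/matrixP=> i j; rewrite !mxE mulrN. Qed.
Lemma tensmx11 m n : (1%:M : 'M[R]_m) *t (1%:M : 'M[R]_n) = 1%:M.
Proof.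
apply/matrixP=> i j; case: (mxtens_indexP i)=> i0 i1; case: (mxtens_indexP j)=> j0 j1.
rewrite tensmxE !mxE (inj_eq (can_inj (@mxtens_indexK _ _))) xpair_eqE.
by rewrite -natrM mulnb.
Qed.

Lemma qformD m (A B : 'M[R]_m) x : qform (A + B) x = qform A x + qform B x.
Proof. by rewrite /qform mulmxDr mulmxDl mxE. Qed.
Lemma qformN m (A : 'M[R]_m) x : qform (- A) x = - qform A x.
Proof. by rewrite /qform mulmxN mulNmx mxE. Qed.
Lemma qform_mul m k (A : 'M[R]_m) (B : 'M[R]_(m,k)) x :
  qform (B^T *m A *m B) x = qform A (B *m x).
Proof. by rewrite /qform trmx_mul !mulmxA. Qed.
End Tens.

Section Psd.
Variable R : realFieldType.

Definition bil m (A : 'M[R]_m) (x y : 'cV[R]_m) := (x^T *m A *m y) 0 0.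

Lemma bil_sym m (A : 'M[R]_m) x y : A^T = A -> bil A y x = bil A x y.
Proof.
move=> HA; rewrite /bil.
have -> : (y^T *m A *m x) 0 0 = ((y^T *m A *m x)^T) 0 0 by rewrite [in RHS]mxE.
by rewrite !trmx_mul trmxK HA mulmxA.
Qed.

Lemma mxE_add a b (M N : 'M[R]_(a,b)) i j : (M + N) i j = M i j + N i j.
Proof. by rewrite mxE. Qed.
Lemma mxE_sub a b (M N : 'M[R]_(a,b)) i j : (M - N) i j = M i j - N i j.
Proof. by rewrite !mxE. Qed.
Lemma mxE_scale a b (c : R) (M : 'M[R]_(a,b)) i j : (c *: M) i j = c * M i j.
Proof. by rewrite mxE. Qed.

Lemma qform_lin m (A : 'M[R]_m) x y t : A^T = A ->
  qform A (x + t *: y) = qform A x + 2 * t * bil A x y + t ^+ 2 * qform A y.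
Proof.
move=> HA; have := bil_sym x y HA; rewrite /bil /qform => Hs.
have -> : (x + t *: y)^T = x^T + t *: y^T by rewrite linearD linearZ.
rewrite !mulmxDr !mulmxDl -?scalemxAr -?scalemxAl -?scalemxAr -?scalemxAl.
rewrite !mxE_add; rewrite !mxE_scale Hs.
ring.
Qed.

Lemma CS m (A : 'M[R]_m) x y : A^T = A -> (forall v, 0 <= qform A v) ->
  bil A x y ^+ 2 <= qform A x * qform A y.
Proof.
move=> HA Hp.
have H t : 0 <= qform A x + 2 * t * bil A x y + t ^+ 2 * qform A y.
  by rewrite -qform_lin.
have ha := Hp y; have hc := Hp x.
set a := qform A y in H ha *; set c := qform A x in H hc *; set b := bil A x y in H *.
have [a0|] := ltP 0 a.
  have := H (- b / a).
  have -> : c + 2 * (- b / a) * b + (- b / a) ^+ 2 * a = c - b ^+ 2 / a.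
    by field; rewrite gt_eqF.
  rewrite subr_ge0 ler_pdivrMr //.
move=> a0; have a00 : a = 0 by apply/eqP; rewrite eq_le a0 ha.
rewrite a00 in H *; rewrite mulr0.
have [b0|bn0] := eqVneq b 0; first by rewrite b0 expr0n.
have := H (- (c + 1) / (2 * b)).
have -> : c + 2 * (- (c + 1) / (2 * b)) * b + (- (c + 1) / (2 * b)) ^+ 2 * 0 = -1.
  by field; rewrite bn0.
by rewrite ler0N1.
Qed.
End Psd.

Section Dec.
Variable R : realFieldType.

Definition psdf m (A : 'M[R]_m) := forall v, 0 <= qform A v.

Lemma mx11_mul (u v : 'M[R]_1) : (u *m v) 0 0 = u 0 0 * v 0 0.
Proof. by rewrite mxE big_ord1. Qed.

Lemma decomp n (N : 'M[R]_n) : N^T = N -> psdf N ->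
  exists s : seq (R * 'cV[R]_n),
    N = \sum_(du <- s) du.1 *: (du.2 *m du.2^T) /\
    (forall du, du \in s -> 0 <= du.1).
Proof.
suff H : forall (m : nat) (N : 'M[R]_n), N^T = N -> psdf N ->
  (forall i : 'I_n, (i < n - m)%N -> N *m (delta_mx i 0 : 'cV[R]_n) = 0) ->
  exists s : seq (R * 'cV[R]_n),
    N = \sum_(du <- s) du.1 *: (du.2 *m du.2^T) /\
    (forall du, du \in s -> 0 <= du.1).
  move=> HT Hp; by apply: (H n) => // i; rewrite subnn ltn0.

elim=> [|m IH] {}N HT Hp HN.
  exists [::]; split; last by [].
  rewrite big_nil; apply/matrixP=> i j.
  have := HN j; rewrite subn0 ltn_ord => /(_ isT) /(congr1 (fun M : 'cV[R]_n => M i 0)).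
  by rewrite -colE !mxE.
case: (ltnP (n - m.+1) n) => hj; last first.
  apply: IH => // i _; apply: HN; exact: leq_trans (ltn_ord i) hj.
pose j := Ordinal hj.
pose e : 'cV[R]_n := delta_mx j 0.
pose c := N *m e.
pose a := qform N e.
have ha : 0 <= a by apply: Hp.
have bilE w : bil N w e = (w^T *m c) 0 0 by rewrite /bil /c mulmxA.
have cTe : c^T *m e = a%:M.
  rewrite [LHS]mx11_scalar /c trmx_mul HT /a /qform; congr (_%:M).
have idx (i : 'I_n) : (i < n - m)%N -> (i < j)%N \/ i = j.
  move=> hi; case: (ltnP i j) => hij; [by left|right; apply: ord_inj => /=].
  move: hij hi; rewrite /= => hij hi; lia.
have cTei (i : 'I_n) : (i < j)%N -> c^T *m (delta_mx i 0 : 'cV[R]_n) = 0.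
  by move=> hi; rewrite /c trmx_mul HT -mulmxA HN // mulmx0.
case: (ltP 0 a) => a0.
  pose S := N - a^-1 *: (c *m c^T).
  have [s [Hs Hs0]] : exists s : seq (R * 'cV[R]_n),
      S = \sum_(du <- s) du.1 *: (du.2 *m du.2^T) /\
      (forall du, du \in s -> 0 <= du.1).
    apply: IH.
    - by rewrite /S linearB linearZ /= trmx_mul trmxK HT.
    - move=> v; rewrite /qform /S mulmxBr mulmxBl -scalemxAr -scalemxAl.
      rewrite mxE_sub mxE_scale.
      have -> : v^T *m (c *m c^T) *m v = (v^T *m c) *m (c^T *m v) by rewrite !mulmxA.
      rewrite mx11_mul.
      have -> : (c^T *m v) 0 0 = (v^T *m c) 0 0.
        by rewrite -[in RHS](trmxK c) -trmx_mul [in RHS]mxE.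
      rewrite -bilE.
      have := CS v e HT Hp; rewrite -/a -/(qform N v) => hcs.
      rewrite subr_ge0 -expr2 mulrC ler_pdivrMr //.
    - move=> i /idx [hi|->].
        by rewrite /S mulmxBl -scalemxAl -mulmxA cTei // mulmx0 scaler0 subr0 HN.
      rewrite /S mulmxBl -scalemxAl -mulmxA -/e cTe mul_mx_scalar scalerA mulVf ?gt_eqF //.
      by rewrite scale1r subrr.
  exists ((a^-1, c) :: s); split.
    by rewrite big_cons /= -Hs /S addrC subrK.
  move=> du; rewrite in_cons => /orP [/eqP -> /=|]; first by rewrite invr_ge0 ltW.
  exact: Hs0.
have a00 : a = 0 by apply/eqP; rewrite eq_le a0 ha.
have c0 : c = 0.
  apply/matrixP=> i k; rewrite [k]ord1 [in RHS]mxE.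
  have := CS (delta_mx i 0) e HT Hp; rewrite -/a a00 mulr0 => h.
  have : bil N (delta_mx i 0) e ^+ 2 == 0 by rewrite eq_le h sqr_ge0.
  by rewrite sqrf_eq0 bilE trmx_delta -rowE mxE => /eqP.
apply: IH => // i /idx [hi|->]; first exact: HN.
exact: c0.
Qed.
End Dec.

Section Kron.
Variable R : realFieldType.

Lemma qform_cast m m' (E : m = m') (A : 'M[R]_m) (y : 'cV[R]_m') :
  qform (castmx (E, E) A) y = qform A (castmx (esym E, erefl) y).
Proof. by case: m' / E y => y; rewrite !castmx_id. Qed.

Lemma qform0 m (y : 'cV[R]_m) : qform 0 y = 0.
Proof. by rewrite /qform mulmx0 mul0mx mxE. Qed.

Lemma qformZ m (d : R) (A : 'M[R]_m) y : qform (d *: A) y = d * qform A y.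
Proof. by rewrite /qform -scalemxAr -scalemxAl mxE. Qed.

Lemma tensmxZr m n p q (A : 'M[R]_(m,n)) d (C : 'M[R]_(p,q)) :
  A *t (d *: C) = d *: (A *t C).
Proof. by apply/matrixP=> i j; rewrite !mxE mulrCA. Qed.

Lemma rank1_psd p n (K : 'M[R]_p) (u : 'cV[R]_n) e :
  psdf K -> 0 <= qform (K *t (u *m u^T)) e.
Proof.
move=> HK.
have -> : K *t (u *m u^T) =
   (1%:M *t u^T)^T *m (K *t (1%:M : 'M[R]_1)) *m (1%:M *t u^T).
  by rewrite trmx_tens trmx1 trmxK !tensmx_mul mul1mx !mulmx1.
rewrite qform_mul tens_mx_scalar scale1r qform_cast; exact: HK.
Qed.

Lemma kron_psd p n (K : 'M[R]_p) (N : 'M[R]_n) e :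
  psdf K -> N^T = N -> psdf N -> 0 <= qform (K *t N) e.
Proof.
move=> HK HT HN; have [s [-> Hs]] := decomp HT HN.
elim: s Hs => [|du s IHs] Hs.
  by rewrite big_nil tensmx0 qform0.
rewrite big_cons tensmxDr qformD addr_ge0 //.
  rewrite tensmxZr qformZ mulr_ge0 //; last exact: rank1_psd.
  by apply: Hs; rewrite mem_head.
by apply: IHs => du' h; apply: Hs; rewrite in_cons h orbT.
Qed.
End Kron.

Section QQ.
Variable R : realFieldType.

Lemma id_psd n : psdf (1%:M : 'M[R]_n).
Proof.
move=> v; rewrite /qform mulmx1 mxE; apply: sumr_ge0 => i _.
by rewrite mxE -expr2 sqr_ge0.
Qed.

Lemma QQ_psd n (Q : 'M[R]_n) : Q^T = Q -> psdf Q -> norm2_le1 Q ->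
  psdf (Q - Q *m Q).
Proof.
move=> HT Hp Hn v.
set w := Q *m v.
set s := (w^T *m w) 0 0.
have hs : 0 <= s by have := id_psd w; rewrite /qform mulmx1.
have e1 : qform (Q - Q *m Q) v = qform Q v - s.
  rewrite /qform mulmxBr mulmxBl mxE_sub /s /w trmx_mul HT !mulmxA.
  done.
have e2 : bil Q v w = s by rewrite /bil /s /w trmx_mul HT !mulmxA.
have cs1 := CS v w HT Hp; rewrite e2 in cs1.
have cs2 := CS w (Q *m w) (trmx1 _ _) (@id_psd n).
have e3 : bil 1%:M w (Q *m w) = qform Q w by rewrite /bil /qform mulmx1 mulmxA.
have e4 : qform 1%:M w = s by rewrite /qform mulmx1.
have e5 : qform 1%:M (Q *m w) <= s by rewrite /qform mulmx1; exact: Hn.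
rewrite e3 e4 in cs2.
have ht := Hp w; have hq := Hp v.
set t := qform Q w in cs1 cs2 ht e3.
set q := qform Q v in cs1 hq e1 *.
have hts : t <= s.
  have : t ^+ 2 <= s ^+ 2.
    apply: (le_trans cs2); rewrite expr2; apply: ler_wpM2l => //.
  by rewrite ler_sqr // nnegrE.
rewrite e1 subr_ge0.
nra.
Qed.
End QQ.

Lemma Z1 (V : zmodType) (W a b c d : V) :
  W + a + (b + c) = W - d - (-(a + b) - (c + d)).
Proof.
rewrite opprB opprK [c + d]addrC !addrA subrK.
rewrite -!addrA; congr (_ + _).
by rewrite addrA [RHS]addrC.
Qed.

Lemma Z2 (V : zmodType) (x y z : V) : x + - (x + y + z) = - (y + z).
Proof. by rewrite -addrA opprD addrA subrr add0r. Qed.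

Lemma Z3 (V : zmodType) (A B C E : V) : A + B + (C + E) - E = A + C + B.
Proof. by rewrite addrA addrK addrAC. Qed.

Theorem lemma4 (R : realFieldType) (p n : nat)
  (L : 'M[R]_p) (r : 'cV[R]_p) (Om : 'M[R]_p)
  (HL : dt_interconnection L) (Hconn : connected_graph L)
  (Hr : r^T *m L = r^T) (Hr1 : r^T *m ones R p = 1%:M)
  (HOm : pd_mx Om)
  (Hlyap : (L - ones R p *m r^T)^T *m Om *m (L - ones R p *m r^T) - Om
           = - 1%:M)
  (Q : nat -> 'M[R]_n) (HQ : forall k, Qbar (Q k))
  (x : nat -> 'cV[R]_(p * n))
  (Hx : forall k, x k.+1 = (1%:M + (L - 1%:M) *t Q k) *m x k) :
  let xbar := ((ones R p *m r^T) *t (1%:M : 'M[R]_n)) *m x 0%N in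
  let V := fun y : 'cV[R]_(p * n) => qform (Om *t (1%:M : 'M[R]_n)) y in
  forall k : nat,
    V (x k.+1 - xbar) - V (x k - xbar)
    <= - qform ((1%:M : 'M[R]_p) *t (Q k *m Q k)) (x k - xbar).
Proof.
move=> xbar V k.
set P := ones R p *m r^T in xbar Hlyap *.
set I := (1%:M : 'M[R]_n) in xbar V *.
have L1 : L *m ones R p = ones R p.
  apply/matrixP=> i j; rewrite [j]ord1 /ones !mxE.
  under eq_bigr do rewrite mxE mulr1.
  exact: HL.2 i.
have PP : P *m P = P by rewrite /P -mulmxA (mulmxA r^T) Hr1 mul1mx.
have LP : L *m P = P by rewrite /P mulmxA L1.
have PL : P *m L = P by rewrite /P -mulmxA Hr.
have Hxbar j : (P *t I) *m x j = xbar.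
  elim: j => [//|j IHj].
  rewrite Hx mulmxA mulmxDr mulmx1 tensmx_mul mulmxBr PL mulmx1 subrr tens0mx.
  by rewrite addr0.
have HAx : (1%:M + (L - 1%:M) *t Q k) *m xbar = xbar.
  rewrite {1}/xbar mulmxA mulmxDl mul1mx tensmx_mul mulmxBl LP mul1mx subrr.
  by rewrite tens0mx addr0.
set e := x k - xbar.
have He : (P *t I) *m e = 0.
  rewrite /e mulmxBr Hxbar {2}/xbar mulmxA tensmx_mul PP mulmx1 -/xbar.
  by rewrite subrr.
set Qk := Q k.
have [[HQs HQp] _] := HQ k.
have [HOs HOp] := HOm.
set D := L - P - 1%:M.
set G := 1%:M + D *t Qk.
have HG : (1%:M + (L - 1%:M) *t Qk) *m e = G *m e.
  have -> : L - 1%:M = D + P by rewrite /D addrAC subrK.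
  rewrite tensmxDl addrA mulmxDl.
  have -> : P *t Qk = (1%:M *t Qk) *m (P *t I) by rewrite tensmx_mul mul1mx mulmx1.
  by rewrite -mulmxA He mulmx0 addr0.
have Hnext : x k.+1 - xbar = G *m e by rewrite Hx -{1}HAx -mulmxBr HG.
have Hly' : D^T *m Om *m D + D^T *m Om + Om *m D = - 1%:M.
  have M_eq : L - P = D + 1%:M by rewrite /D subrK.
  rewrite M_eq in Hlyap.
  move: Hlyap.
  have -> : (D + 1%:M)^T = D^T + 1%:M by rewrite linearD /= trmx1.
  rewrite (mulmxDl (D^T) 1%:M Om) mul1mx (mulmxDr _ D) mulmx1 (mulmxDl _ _ D).
  by rewrite Z3.
clearbody D.
set W := Om *t I.
set K := D^T *m Om *m D + 1%:M.
have HK : K = - (D^T *m Om + Om *m D).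
  by rewrite /K -[1%:M]opprK -Hly' Z2.
have GT : G^T = 1%:M + D^T *t Qk by rewrite /G linearD /= trmx1 trmx_tens HQs.
have Hid : G^T *m W *m G = W - 1%:M *t (Qk *m Qk) - K *t (Qk - Qk *m Qk).
  rewrite GT /G /W /I mulmxDl mul1mx !mulmxDr !mulmx1 mulmxDl !tensmx_mul ?mul1mx ?mulmx1.
  rewrite tensmxDr tensmxNr {1}HK tensmxNl tensmxDl /K tensmxDl.
  exact: Z1.
have HKp : psdf K.
  move=> v; rewrite /K qformD qform_mul addr_ge0 ?id_psd //.
  have [->|nz] := eqVneq (D *m v) 0; last exact: ltW (HOp _ nz).
  by rewrite /qform mulmx0 mxE.
have HNs : (Qk - Qk *m Qk)^T = Qk - Qk *m Qk.
  by rewrite linearB /= trmx_mul HQs.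
have HNp : psdf (Qk - Qk *m Qk) by apply: QQ_psd => //; exact: (HQ k).2.
have := kron_psd e HKp HNs HNp.
rewrite /V Hnext -qform_mul Hid !qformD !qformN.
lra.
Qed.
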